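(* (a) Let $V\subset\mathbb R^m$ be a closed convex body centrally symmetric with respect to the origin, with width $w(V)$. For every $x\in\mathbb R^m\setminus V$ and every $P\in\mathcal P_{n,m}$, $$|P(x)|\le T_n\big(2|x|/w(V)\big)\|P\|_{C(V)}.$$ (b) For every $\lambda>0$, $k\in\mathbb Z^m_+$, $x\in\mathbb R^m$ with $|x_j|>\lambda$ for all $j=1,\dots,m$, and every $P\in\mathcal Q_{n,m}$, $$|D^kP(x)|\le\lambda^{-\langle k\rangle}\Big|\prod_{j=1}^mT_n^{(k_j)}(x_j/\lambda)\Big|\,\|P\|_{C(Q^m_\lambda)}.$$
   Context: $|x|$ is the Euclidean norm. The width $w(V)$ is the minimum distance between two parallel supporting hyperplanes of $V$. $\mathcal P_{n,m}$ is the set of polynomials $\sum_{\langle k\rangle\le n}c_kx^k$ in $m$ variables with complex coefficients of total degree at most $n$; $\mathcal Q_{n,m}$ is the set of polynomials $\sum_{k\in\mathbb Z^m_+,\max_jk_j\le n}c_kx^k$ with complex coefficients of degree at most $n$ in each variable. For $k\in\mathbb Z^m_+$: $\langle k\rangle=\sum k_j$, $x^k=\prod x_j^{k_j}$, $D^k=\prod\partial^{k_j}/\partial x_j^{k_j}$. $Q^m_\lambda=\{x:\max_j|x_j|\le\lambda\}$. $T_n(u)=\frac12((u+\sqrt{u^2-1})^n+(u-\sqrt{u^2-1})^n)$ is the Chebyshev polynomial; $\|P\|_{C(S)}=\max_S|P|$. *)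

(* Defs.v *)
From mathcomp Require Import all_boot all_order all_algebra.
From mathcomp Require Import all_classical all_reals all_analysis.

Set Implicit Arguments.
Unset Strict Implicit.
Unset Printing Implicit Defensive.

Import Order.TTheory GRing.Theory Num.Theory.
From mathcomp.real_closed Require Import complex.
Local Open Scope ring_scope.
Local Open Scope classical_set_scope.

Section Defs.
Variable R : realType.

Definition dotv (m : nat) (x y : 'rV[R]_m) : R := \sum_(j < m) x ord0 j * y ord0 j.
Definition enorm (m : nat) (x : 'rV[R]_m) : R := Num.sqrt (dotv x x).

Definition eclosed (m : nat) (V : set 'rV[R]_m) : Prop :=
  forall x, (forall e : R, 0 < e -> exists2 v, V v & enorm (x - v) < e) -> V x.
Definition convex_set (m : nat) (V : set 'rV[R]_m) : Prop :=
  forall a b (t : R), V a -> V b -> 0 <= t <= 1 -> V (t *: a + (1 - t) *: b).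
Definition ebounded (m : nat) (V : set 'rV[R]_m) : Prop :=
  exists M : R, forall v, V v -> enorm v <= M.
Definition nonempty_interior (m : nat) (V : set 'rV[R]_m) : Prop :=
  exists x (r : R), 0 < r /\ forall y, enorm (y - x) < r -> V y.
Definition convex_body (m : nat) (V : set 'rV[R]_m) : Prop :=
  [/\ eclosed V, ebounded V, convex_set V & nonempty_interior V].
Definition centrally_symmetric (m : nat) (V : set 'rV[R]_m) : Prop :=
  forall v, V v -> V (- v).

Definition supporting_hyperplane (m : nat) (V : set 'rV[R]_m) (u : 'rV[R]_m) (c : R) :=
  enorm u = 1 /\
  ((forall v, V v -> dotv v u <= c) \/ (forall v, V v -> c <= dotv v u)) /\
  exists2 v, V v & dotv v u = c.

(* width: minimum distance between two (distinct) parallel supporting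
   hyperplanes {<y,u> = c1} and {<y,u> = c2}; their distance is |c1 - c2| *)
Definition width (m : nat) (V : set 'rV[R]_m) : R :=
  inf [set d : R | exists u c1 c2, [/\ supporting_hyperplane V u c1,
        supporting_hyperplane V u c2, c1 != c2 & d = `|c1 - c2|]].

Definition mindex (m n : nat) := {ffun 'I_m -> 'I_n.+1}.
Definition deg (m n : nat) (k : mindex m n) : nat := \sum_(j < m) (k j : nat).

Definition monom (m n : nat) (k : mindex m n) (x : 'rV[R]_m) : R :=
  \prod_(j < m) x ord0 j ^+ k j.

(* P in P_{n,m}: coefficients c : mindex m n -> C, only monomials of total
   degree <= n are used; evaluation P(x) = sum_{<k> <= n} c_k x^k *)
Definition evalP (m n : nat) (c : mindex m n -> R[i]) (x : 'rV[R]_m) : R[i] :=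
  \sum_(k : mindex m n | (deg k <= n)%N) c k * real_complex R (monom k x).

(* P in Q_{n,m}: P(x) = sum_{max_j k_j <= n} c_k x^k *)
Definition evalQ (m n : nat) (c : mindex m n -> R[i]) (x : 'rV[R]_m) : R[i] :=
  \sum_(k : mindex m n) c k * real_complex R (monom k x).

(* (D^k P)(x) for P in Q_{n,m}, with D^k = prod_j d^{k_j}/dx_j^{k_j}:
   D^k x^j = prod_i (j_i (j_i - 1) ... (j_i - k_i + 1)) x_i^(j_i - k_i) *)
Definition evalDQ (m n : nat) (kd : 'I_m -> nat) (c : mindex m n -> R[i])
    (x : 'rV[R]_m) : R[i] :=
  \sum_(k : mindex m n) c k *
     real_complex R (\prod_(j < m)
        (((k j : nat) ^_ (kd j))%N%:R * x ord0 j ^+ (k j - kd j)%N)).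

Definition cabs (z : R[i]) : R := Normc.normc z.

Definition supnorm (m : nat) (S : set 'rV[R]_m) (f : 'rV[R]_m -> R[i]) : R :=
  sup [set cabs (f y) | y in S].

(* Chebyshev polynomial T_n(u) = ((u + sqrt(u^2-1))^n + (u - sqrt(u^2-1))^n)/2;
   written with the real square root, hence literal for |u| >= 1 (the only
   region where it is used, together with its derivatives at |u| > 1) *)
Definition cheb (n : nat) (u : R) : R :=
  ((u + Num.sqrt (u ^+ 2 - 1)) ^+ n + (u - Num.sqrt (u ^+ 2 - 1)) ^+ n) / 2.

Definition cube (m : nat) (lam : R) : set 'rV[R]_m :=
  [set x | forall j, `|x ord0 j| <= lam].

End Defs.

(* Main.v *)
Require Import Defs.
From mathcomp Require Import all_boot all_order all_algebra.
From mathcomp Require Import all_classical all_reals all_analysis.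
Import Order.TTheory GRing.Theory Num.Theory.
From mathcomp.real_closed Require Import complex.
Local Open Scope ring_scope.
Local Open Scope classical_set_scope.

From mathcomp Require Import ring lra zify.
Import numFieldNormedType.Exports.
Set Implicit Arguments.
Unset Strict Implicit.
Unset Printing Implicit Defensive.
Local Close Scope classical_set_scope.

Section Cheb.
Variable R : realType.

Fixpoint Tp2 (n : nat) : {poly R} * {poly R} :=
  if n is n'.+1 then ((Tp2 n').2, 'X * (Tp2 n').2 *+ 2 - (Tp2 n').1) else (1, 'X).
Definition Tp n := (Tp2 n).1.
Lemma Tp0 : Tp 0 = 1. Proof. by []. Qed.
Lemma Tp1 : Tp 1 = 'X. Proof. by []. Qed.
Lemma TpSS n : Tp n.+2 = 'X * Tp n.+1 *+ 2 - Tp n. Proof. by []. Qed.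

Lemma size_Tp n : (size (Tp n) <= n.+1)%N.
Proof.
suff: (size (Tp n) <= n.+1)%N /\ (size (Tp n.+1) <= n.+2)%N by case.
elim: n => [|n [IH1 IH2]]; first by rewrite Tp0 Tp1 size_poly1 size_polyX.
split=> //; rewrite TpSS.
apply: (leq_trans (size_polyD _ _)); rewrite size_polyN geq_max; apply/andP; split;
  last by apply: (leq_trans IH1); lia.
rewrite mulr2n; apply: (leq_trans (size_polyD _ _)); rewrite geq_max andbb.
apply: (leq_trans (size_mul_leq _ _)); rewrite size_polyX add2n /=.
by rewrite ltnS.
Qed.

Lemma Tp_cos n t : (Tp n).[cos t] = cos (n%:R * t).
Proof.
suff: (Tp n).[cos t] = cos (n%:R * t) /\ (Tp n.+1).[cos t] = cos (n.+1%:R * t) by case.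
elim: n => [|n [IH1 IH2]]; first by rewrite Tp0 Tp1 !hornerE cos0.
split=> //; rewrite TpSS !hornerE IH1 IH2.
have -> : n.+2%:R * t = n.+1%:R * t + t by rewrite -natr1 mulrDl mul1r.
have -> : n%:R * t = n.+1%:R * t - t by rewrite -natr1 mulrDl mul1r addrK.
rewrite !cosD cosN sinN; ring.
Qed.

Lemma cheb_Tp n u : 1 <= `|u| -> cheb n u = (Tp n).[u].
Proof.
move=> hu; rewrite /cheb.
set s := Num.sqrt (u ^+ 2 - 1).
have hs : s ^+ 2 = u ^+ 2 - 1.
  rewrite sqr_sqrtr // subr_ge0 -real_normK ?num_real //.
  by rewrite -(expr1n _ 2) lerXn2r ?nnegrE.
suff: ((u + s) ^+ n + (u - s) ^+ n) / 2 = (Tp n).[u] /\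
      ((u + s) ^+ n.+1 + (u - s) ^+ n.+1) / 2 = (Tp n.+1).[u] by case.
elim: n => [|n [IH1 IH2]].
  rewrite Tp0 Tp1 hornerC hornerX !expr0 !expr1; by split; field.
split=> //; rewrite TpSS !hornerE -IH1 -IH2.
have ha : (u + s) ^+ n.+2 = (u + s) ^+ n * (u + s) ^+ 2 by rewrite -exprD addn2.
have hb : (u - s) ^+ n.+2 = (u - s) ^+ n * (u - s) ^+ 2 by rewrite -exprD addn2.
rewrite ha hb.
have e1 : (u + s) ^+ 2 = 2 * u * (u + s) - 1 by rewrite sqrrD hs; ring.
have e2 : (u - s) ^+ 2 = 2 * u * (u - s) - 1 by rewrite sqrrB hs; ring.
rewrite e1 e2 !exprS mulr2n; by field.
Qed.

Definition eta (n i : nat) : R := cos (i%:R * pi / n%:R).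

Lemma cos_npi i : cos (i%:R * pi) = (-1) ^+ i :> R.
Proof.
elim: i => [|i IH]; first by rewrite mul0r cos0 expr0.
by rewrite -natr1 mulrDl mul1r cosDpi IH exprS mulN1r.
Qed.

Lemma Tp_eta n i : (i <= n)%N -> (Tp n).[eta n i] = (-1) ^+ i.
Proof.
case: n => [|n]; first by rewrite leqn0 => /eqP ->; rewrite Tp0 hornerE expr0.
move=> _; rewrite /eta Tp_cos.
by rewrite mulrC divfK ?cos_npi // pnatr_eq0.
Qed.

Lemma eta_le1 n i : `|eta n i| <= 1.
Proof. exact: cos_max. Qed.

Lemma eta_lt n i j : (i < j)%N -> (j <= n)%N -> eta n j < eta n i.
Proof.
move=> ij jn; have n0 : (0 < n)%N by apply: (leq_trans _ jn); apply: leq_ltn_trans ij.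
have n0' : 0 < n%:R :> R by rewrite ltr0n.
rewrite /eta ltr_cos.
- by rewrite ltr_pM2r ?invr_gt0 // ltr_pM2r ?pi_gt0 // ltr_nat.
- rewrite in_itv /= divr_ge0 ?mulr_ge0 ?ler0n ?pi_ge0 //=.
  by rewrite ler_pdivrMr // mulrC ler_pM2l ?pi_gt0 // ler_nat; lia.
- rewrite in_itv /= divr_ge0 ?mulr_ge0 ?ler0n ?pi_ge0 //=.
  by rewrite ler_pdivrMr // mulrC ler_pM2l ?pi_gt0 // ler_nat; lia.
Qed.
End Cheb.

Section Lag.
Variable R : realType.
Local Notation eta := (@eta R).

Definition nds n i := [seq j <- iota 0 n.+1 | j != i].
Definition qL n i : {poly R} := \prod_(j <- nds n i) ('X - (eta n j)%:P).
Definition cL n i : R := (\prod_(j <- nds n i) (eta n i - eta n j))^-1.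
Definition ell n i : {poly R} := cL n i *: qL n i.

Lemma eta_inj n i j : (i <= n)%N -> (j <= n)%N -> eta n i = eta n j -> i = j.
Proof.
move=> hi hj he; case: (ltngtP i j) => // h.
- by move: (eta_lt R h hj); rewrite he ltxx.
- by move: (eta_lt R h hi); rewrite he ltxx.
Qed.

Lemma mem_nds n i j : (j \in nds n i) = (j != i) && (j <= n)%N.
Proof. by rewrite mem_filter mem_iota add0n ltnS. Qed.

Lemma nds_split n i : (i <= n)%N -> nds n i = iota 0 i ++ iota i.+1 (n - i).
Proof.
move=> hi; rewrite /nds.
have -> : n.+1 = (i + (n - i).+1)%N by lia.
rewrite iotaD filter_cat add0n /= eqxx /=.
congr (_ ++ _).
  apply/all_filterP/allP => j; rewrite mem_iota => /andP[_ h].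
  by rewrite neq_ltn h.
apply/all_filterP/allP => j; rewrite mem_iota => /andP[h _].
by rewrite neq_ltn h orbT.
Qed.

Lemma size_nds n i : (i <= n)%N -> size (nds n i) = n.
Proof. by move=> hi; rewrite nds_split // size_cat !size_iota; lia. Qed.

Lemma size_qL n i : (i <= n)%N -> size (qL n i) = n.+1.
Proof. by move=> hi; rewrite /qL size_prod_XsubC size_nds. Qed.

Lemma size_ell n i : (i <= n)%N -> (size (ell n i) <= n.+1)%N.
Proof. by move=> hi; rewrite -(size_qL hi) size_scale_leq. Qed.

Lemma horner_qL n i x : (qL n i).[x] = \prod_(j <- nds n i) (x - eta n j).
Proof. by rewrite /qL horner_prod; apply: eq_bigr => j _; rewrite hornerXsubC. Qed.

Lemma ell_eta n i j : (i <= n)%N -> (j <= n)%N ->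
  (ell n i).[eta n j] = (i == j)%:R.
Proof.
move=> hi hj; rewrite /ell hornerZ horner_qL /cL.
case: (eqVneq i j) => [<-|ij].
  rewrite mulVf //; rewrite prodf_seq_neq0; apply/allP => k.
  rewrite mem_nds => /andP[ki kn] /=; rewrite subr_eq0.
  by apply/eqP => /(eta_inj hi kn) /eqP; rewrite eq_sym (negbTE ki).
have /eqP -> : \prod_(j0 <- nds n i) (eta n j - eta n j0) == 0.
  rewrite prodf_seq_eq0; apply/hasP; exists j; first by rewrite mem_nds eq_sym ij.
  by rewrite /= subrr eqxx.
by rewrite mulr0.
Qed.

Lemma interp n (p : {poly R}) : (size p <= n.+1)%N ->
  p = \sum_(i < n.+1) p.[eta n i] *: ell n i.
Proof.
move=> hp; apply/eqP; rewrite -subr_eq0; apply/eqP.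
set d := p - _.
have hd : forall j, (j <= n)%N -> d.[eta n j] = 0.
  move=> j hj; rewrite /d hornerD hornerN horner_sum.
  have hj' : (j < n.+1)%N by [].
  rewrite (bigD1 (Ordinal hj')) //= hornerZ ell_eta // eqxx mulr1.
  rewrite big1 ?addr0 ?subrr // => k hk; rewrite hornerZ ell_eta //.
    by move: hk; rewrite -val_eqE /= => /negbTE ->; rewrite mulr0.
  by have := ltn_ord k.
have sd : (size d <= n.+1)%N.
  apply: (leq_trans (size_polyD _ _)); rewrite size_polyN geq_max hp /=.
  elim/big_ind: _ => //; first by rewrite size_poly0.
    by move=> x y hx hy; apply: (leq_trans (size_polyD _ _)); rewrite geq_max hx hy.
  move=> i _; apply: (leq_trans (size_scale_leq _ _)); apply: size_ell.
  by have := ltn_ord i.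
case: (eqVneq d 0) => // dn0; exfalso.
have := max_poly_roots dn0 (rs := [seq eta n j | j <- iota 0 n.+1]).
rewrite size_map size_iota => H.
suff : (n.+1 < size d)%N by rewrite ltnNge sd.
apply: H.
  apply/allP => x /mapP [j]; rewrite mem_iota add0n ltnS => /andP[_ hj] ->.
  by rewrite /root hd.
rewrite map_inj_in_uniq ?iota_uniq // => a b.
rewrite !mem_iota !add0n !ltnS => /andP[_ ha] /andP[_ hb]; exact: eta_inj.
Qed.

Lemma Tp_interp n : Tp R n = \sum_(i < n.+1) (-1) ^+ i *: ell n i.
Proof.
rewrite {1}(interp (size_Tp R n)); apply: eq_bigr => i _.
by rewrite Tp_eta //; have := ltn_ord i.
Qed.

Lemma Xn_interp n a : (a <= n)%N -> 'X^a = \sum_(i < n.+1) (eta n i) ^+ a *: ell n i.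
Proof.
move=> ha; rewrite {1}(@interp n 'X^a); last by rewrite size_polyXn.
by apply: eq_bigr => i _; rewrite hornerXn.
Qed.

Lemma derivn_XsubC_mul (a : R) (r : {poly R}) k :
  (('X - a%:P) * r)^`(k) = ('X - a%:P) * r^`(k) + r^`(k.-1) *+ k.
Proof.
elim: k => [|k IH]; first by rewrite !derivn0 mulr0n addr0.
rewrite derivnS IH derivD derivM derivXsubC mul1r derivMn -derivnS.
case: k IH => [|k] IH /=; first by rewrite mulr0n mulr1n addr0 addrC.
rewrite (mulrS _ k.+1); ring.
Qed.

Lemma der_prod_ge0 (s : seq nat) (f : nat -> R) t k :
  (forall j, j \in s -> f j < t) ->
  0 <= ((\prod_(j <- s) ('X - (f j)%:P))^`(k)).[t].
Proof.
elim: s k => [|a s IH] k hs.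
  by rewrite big_nil -polyC1 derivnC; case: ifP => _; rewrite hornerC ?ler01 ?lexx.
have hs' : forall j, j \in s -> f j < t by move=> j hj; apply: hs; rewrite inE hj orbT.
rewrite big_cons derivn_XsubC_mul hornerD hornerM hornerMn hornerXsubC.
apply: addr_ge0; last by apply: mulrn_wge0; apply: IH.
apply: mulr_ge0; last by apply: IH.
by rewrite subr_ge0 ltW // hs // inE eqxx.
Qed.

Lemma der_prod_sgn (s : seq nat) (f : nat -> R) t k :
  (forall j, j \in s -> t < f j) ->
  0 <= (-1) ^+ (size s + k) * ((\prod_(j <- s) ('X - (f j)%:P))^`(k)).[t].
Proof.
elim: s k => [|a s IH] k hs.
  rewrite big_nil -polyC1 derivnC; case: ifP => [/eqP ->|_]; rewrite hornerC ?mulr0 //.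
  by rewrite expr0 mulr1 ler01.
have hs' : forall j, j \in s -> t < f j by move=> j hj; apply: hs; rewrite inE hj orbT.
have ha : 0 <= f a - t by rewrite subr_ge0 ltW // hs // inE eqxx.
rewrite big_cons derivn_XsubC_mul hornerD hornerM hornerMn hornerXsubC /=.
set r := \prod_(j <- s) _.
case: k => [|k].
  rewrite mulr0n addr0 addn0 exprS.
  have -> : -1 * (-1) ^+ size s * ((t - f a) * r.[t]) =
            (f a - t) * ((-1) ^+ (size s + 0) * (r^`(0)).[t]) by rewrite addn0 derivn0; ring.
  by apply: mulr_ge0 => //; apply: IH.
have h1 := IH k hs'; have h2 := IH k.+1 hs'.
rewrite addSn addnS exprS [in X in _ <= X]exprS.
set e := (-1) ^+ (size s + k).
move: h2; rewrite addnS exprS -/e => h2.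
have -> : -1 * (-1 * e) * ((t - f a) * (r^`(k.+1)).[t] + (r^`(k.+1.-1)).[t] *+ k.+1)
  = (f a - t) * (-1 * e * (r^`(k.+1)).[t]) + (e * (r^`(k)).[t]) *+ k.+1.
  by rewrite /= -!mulrnAr; ring.
by apply: addr_ge0; [apply: mulr_ge0 | apply: mulrn_wge0].
Qed.

Lemma prod_neg_sgn (s : seq nat) (F : nat -> R) :
  (forall j, j \in s -> F j < 0) -> 0 < (-1) ^+ size s * \prod_(j <- s) F j.
Proof.
elim: s => [|a s IH] hs; first by rewrite big_nil expr0 mulr1 ltr01.
have hs' : forall j, j \in s -> F j < 0 by move=> j hj; apply: hs; rewrite inE hj orbT.
rewrite big_cons /= exprS.
have -> : -1 * (-1) ^+ size s * (F a * \prod_(j <- s) F j) =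
          (- F a) * ((-1) ^+ size s * \prod_(j <- s) F j) by ring.
by apply: mulr_gt0; [rewrite oppr_gt0 hs // inE eqxx | apply: IH].
Qed.

Lemma prod_pos (s : seq nat) (F : nat -> R) :
  (forall j, j \in s -> 0 < F j) -> 0 < \prod_(j <- s) F j.
Proof.
elim: s => [|a s IH] hs; first by rewrite big_nil ltr01.
rewrite big_cons; apply: mulr_gt0; first by apply: hs; rewrite inE eqxx.
by apply: IH => j hj; apply: hs; rewrite inE hj orbT.
Qed.

Lemma cL_sgn n i : (i <= n)%N -> 0 < (-1) ^+ i * cL n i.
Proof.
move=> hi; rewrite /cL nds_split // big_cat /=.
set P1 := \prod_(j <- iota 0 i) _; set P2 := \prod_(j <- _) _.
have h1 : 0 < (-1) ^+ i * P1.
  have := @prod_neg_sgn (iota 0 i) (fun j => eta n i - eta n j).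
  rewrite size_iota; apply => j; rewrite mem_iota add0n => /andP[_ hj].
  by rewrite subr_lt0; apply: eta_lt.
have h2 : 0 < P2.
  apply: prod_pos => j; rewrite mem_iota => /andP[h1' h2'].
  by rewrite subr_gt0; apply: eta_lt => //; lia.
have -> : (-1) ^+ i * (P1 * P2)^-1 = ((-1) ^+ i * P1 * P2)^-1.
  by rewrite !invfM -exprVn invrN1 mulrA.
by rewrite invr_gt0 mulr_gt0.
Qed.

Definition sgnT n k (t : R) : R := if 1 < t then 1 else (-1) ^+ (n + k).

Lemma sum_ell_der n k t : 1 < `|t| ->
  \sum_(i < n.+1) `|((ell n i)^`(k)).[t]| = sgnT n k t * ((Tp R n)^`(k)).[t].
Proof.
move=> ht.
have hq : forall i, (i <= n)%N -> 0 <= sgnT n k t * ((qL n i)^`(k)).[t].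
  move=> i hi; rewrite /sgnT; case: ifP => h.
    rewrite mul1r; apply: der_prod_ge0 => j _.
    by apply: (le_lt_trans (ler_norm _)); apply: (le_lt_trans (eta_le1 _ _ _)).
  have := @der_prod_sgn (nds n i) (eta n) t k; rewrite size_nds //; apply => j _.
  move: ht; rewrite ltr_normr h /= => ht.
  have := eta_le1 R n j; rewrite ler_norml => /andP[h3 _].
  lra.
have hs : `|sgnT n k t| = 1 by rewrite /sgnT; case: ifP => _; rewrite ?normr1 // normrX normrN1 expr1n.
have hi : forall i : 'I_n.+1, `|((ell n i)^`(k)).[t]| =
    sgnT n k t * ((-1) ^+ i * ((ell n i)^`(k)).[t]).
  move=> i; have hi : (i <= n)%N by have := ltn_ord i.
  have h0 : 0 <= sgnT n k t * ((-1) ^+ i * ((ell n i)^`(k)).[t]).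
    rewrite /ell derivnZ hornerZ.
    have -> : sgnT n k t * ((-1) ^+ i * (cL n i * ((qL n i)^`(k)).[t])) =
      ((-1) ^+ i * cL n i) * (sgnT n k t * ((qL n i)^`(k)).[t]) by ring.
    by apply: mulr_ge0; [apply: ltW; apply: cL_sgn | apply: hq].
  by rewrite -(ger0_norm h0) !normrM hs normrX normrN1 expr1n !mul1r.
rewrite (eq_bigr _ (fun i _ => hi i)) -mulr_sumr; congr (_ * _).
rewrite Tp_interp raddf_sum horner_sum; apply: eq_bigr => i _.
by rewrite /ell /= !derivnZ !hornerZ.
Qed.

Lemma sum_ell_norm n k t : 1 < `|t| ->
  \sum_(i < n.+1) `|((ell n i)^`(k)).[t]| = `|((Tp R n)^`(k)).[t]|.
Proof.
move=> ht; have := sum_ell_der n k ht => H.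
have h0 : 0 <= \sum_(i < n.+1) `|((ell n i)^`(k)).[t]| by apply: sumr_ge0 => i _.
rewrite -(ger0_norm h0) H normrM.
suff -> : `|sgnT n k t| = 1 by rewrite mul1r.
by rewrite /sgnT; case: ifP => _; rewrite ?normr1 // normrX normrN1 expr1n.
Qed.

Lemma sum_ell_pos n t : 1 < t ->
  \sum_(i < n.+1) `|(ell n i).[t]| = (Tp R n).[t].
Proof.
move=> ht; have ht' : 1 < `|t| by rewrite (lt_le_trans ht) // ler_norm.
by have := sum_ell_der n 0 ht'; rewrite /sgnT ht mul1r.
Qed.

End Lag.

Section PB.
Context {R : realType}.

Lemma cabs_real (r : R) : cabs (real_complex R r) = `|r|.
Proof. by rewrite /cabs /= expr0n /= addr0 sqrtr_sqr. Qed.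

Lemma cabs_ge0 (z : R[i]) : 0 <= cabs z.
Proof. by case: z => a b; rewrite /cabs /= sqrtr_ge0. Qed.

Lemma cabsM (z w : R[i]) : cabs (z * w) = cabs z * cabs w.
Proof. exact: Normc.normcM. Qed.

Lemma cabs_sum I (r : seq I) (P : pred I) (F : I -> R[i]) :
  cabs (\sum_(i <- r | P i) F i) <= \sum_(i <- r | P i) cabs (F i).
Proof.
elim/big_rec2: _ => [|i y z _ h]; first by rewrite /cabs /= expr0n /= addr0 sqrtr0.
by apply: (le_trans (le_normcD _ _)); rewrite lerD2l.
Qed.

Lemma supnorm_ge m (S : set 'rV[R]_m) (g : 'rV[R]_m -> R[i]) y B :
  S y -> (forall z, S z -> cabs (g z) <= B) -> cabs (g y) <= supnorm S g.
Proof.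
move=> Sy hB; apply: ub_le_sup; last by exists y.
by exists B => _ [z Sz <-]; apply: hB.
Qed.

Lemma sum_mono_bound m n (P : pred (mindex m n)) (c : mindex m n -> R[i]) B
    (z : 'rV[R]_m) : (forall j, `|z ord0 j| <= B) ->
  cabs (\sum_(k | P k) c k * real_complex R (monom k z)) <=
  \sum_(k | P k) cabs (c k) * \prod_j B ^+ k j.
Proof.
move=> hz; apply: (le_trans (cabs_sum _ _ _)); apply: ler_sum => k _.
rewrite cabsM cabs_real; apply: ler_wpM2l; first exact: cabs_ge0.
rewrite /monom normr_prod; apply: ler_prod => j _.
rewrite normr_ge0 /= normrX; apply: lerXn2r => //; rewrite ?nnegrE //.
exact: (le_trans (normr_ge0 _) (hz j)).
Qed.

Lemma derive1n_poly (f : R -> R) (p : {poly R}) k y :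
  (forall z, 1 < `|z| -> f z = p.[z]) -> 1 < `|y| ->
  derive1n k f y = (p^`(k)).[y].
Proof.
move=> hf; elim: k y => [|k IH] y hy; first by rewrite /= hf.
have hn : \forall z \near y, 1 < `|z|.
  apply/nbhs_normP; exists (`|y| - 1); first by rewrite /= subr_gt0.
  move=> z /= hz; have h := ler_normD (y - z) z; rewrite subrK in h; lra.
change (derive1 (derive1n k f) y = (p^`(k.+1)).[y]).
rewrite derive1E (@near_eq_derive _ _ _ _ (horner (p^`(k)))).
  by rewrite -derive1E -derivE poly.derivnS.
by apply: filterS hn => z hz; apply: IH.
Qed.

Lemma derivn_sum_scale n d (a : 'I_n.+1 -> R) (p : 'I_n.+1 -> {poly R}) :
  (\sum_i a i *: p i)^`(d) = \sum_i a i *: (p i)^`(d).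
Proof.
elim/big_rec2: _ => [|i y q _ <-].
  by rewrite -polyC0 derivnC; case: ifP.
by rewrite derivnD derivnZ.
Qed.

Lemma mono_der_interp n a d (lam x : R) : 0 < lam -> (a <= n)%N ->
  (a ^_ d)%:R * x ^+ (a - d) =
  lam ^- d * \sum_(i < n.+1) (lam * eta R n i) ^+ a * ((ell R n i)^`(d)).[x / lam].
Proof.
move=> hl ha.
have key : \sum_(i < n.+1) (eta R n i) ^+ a * ((ell R n i)^`(d)).[x / lam]
          = (x / lam) ^+ (a - d) *+ (a ^_ d).
  have := congr1 (fun p => ((p^`(d)).[x/lam])) (@Xn_interp R n a ha).
  rewrite /= derivnXn hornerMn hornerXn derivn_sum_scale horner_sum => ->.
  by apply: eq_bigr => i _; rewrite hornerZ.
rewrite (eq_bigr (fun i : 'I_n.+1 => lam ^+ a * (eta R n i ^+ a * ((ell R n i)^`(d)).[x / lam]))); last by move=> i _; rewrite exprMn mulrA.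
rewrite -mulr_sumr key.
have l0 : lam != 0 by rewrite gt_eqF.
case: (leqP d a) => hda.
  rewrite -[in lam ^+ a](subnK hda) exprD expr_div_n -mulr_natl.
  by field; rewrite !expf_neq0.
by rewrite ffact_small // mulr0n !mulr0 mul0r.
Qed.

End PB.

Section PB2.
Context {R : realType}.
Local Notation RC := (real_complex R).

Definition grid m n (lam : R) (f : mindex m n) : 'rV[R]_m := \row_j (lam * eta R n (f j)).

Lemma evalDQ_interp m n (kd : 'I_m -> nat) (c : mindex m n -> R[i]) (x : 'rV[R]_m) lam :
  0 < lam ->
  evalDQ kd c x = RC (lam ^- (\sum_j kd j)%N) *
    \sum_(f : mindex m n) RC (\prod_j ((ell R n (f j))^`(kd j)).[x ord0 j / lam]) *
       evalQ c (grid lam f).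
Proof.
move=> hl.
have hk : forall k : mindex m n,
  \prod_(j < m) (((k j : nat) ^_ (kd j))%:R * x ord0 j ^+ (k j - kd j)) =
  lam ^- (\sum_j kd j)%N * \sum_(f : mindex m n)
     (\prod_j (lam * eta R n (f j)) ^+ k j) *
     \prod_j ((ell R n (f j))^`(kd j)).[x ord0 j / lam].
  move=> k.
  rewrite (eq_bigr _ (fun j _ => @mono_der_interp R n (k j) (kd j) lam (x ord0 j) hl (ltn_ord (k j)))).
  rewrite big_split /= prodfV prodrXr; congr (_ * _).
  rewrite bigA_distr_bigA; apply: eq_bigr => f _.
  by rewrite big_split.
rewrite /evalDQ /evalQ.
transitivity (\sum_(k : mindex m n) \sum_(f : mindex m n)
   c k * RC (lam ^- (\sum_j kd j)%N) * RC (\prod_j (lam * eta R n (f j)) ^+ k j) *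
   RC (\prod_j ((ell R n (f j))^`(kd j)).[x ord0 j / lam])).
  apply: eq_bigr => k _; rewrite hk rmorphM rmorph_sum mulr_sumr mulr_sumr.
  by apply: eq_bigr => f _; rewrite rmorphM; ring.
rewrite exchange_big mulr_sumr; apply: eq_bigr => f _.
rewrite mulr_sumr mulr_sumr; apply: eq_bigr => k _.
have -> : monom k (grid lam f) = \prod_j (lam * eta R n (f j)) ^+ k j.
  by rewrite /monom; apply: eq_bigr => j _; rewrite mxE.
ring.
Qed.

Lemma partB m n (lam : R) (kd : 'I_m -> nat) (x : 'rV[R]_m) (c : mindex m n -> R[i]) :
  0 < lam -> (forall j, lam < `|x ord0 j|) ->
  cabs (evalDQ kd c x) <= lam ^- (\sum_(j < m) kd j)%N *
     `|\prod_(j < m) derive1n (kd j) (cheb n) (x ord0 j / lam)| *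
     supnorm (@cube R m lam) (evalQ c).
Proof.
move=> hl hx.
set M := supnorm _ _.
have hy : forall j, 1 < `|x ord0 j / lam|.
  move=> j; rewrite normrM normfV (gtr0_norm hl) ltr_pdivlMr // mul1r; exact: hx.
have hM : forall f : mindex m n, cabs (evalQ c (grid lam f)) <= M.
  move=> f; apply: (@supnorm_ge _ _ _ _ _ (\sum_k cabs (c k) * \prod_j lam ^+ k j)).
    move=> j; rewrite /grid mxE normrM (gtr0_norm hl) ler_piMr ?eta_le1 //; exact: ltW.
  by move=> z hz; apply: sum_mono_bound; exact: hz.
have M0 : 0 <= M := le_trans (cabs_ge0 _) (hM [ffun=> ord0]).
have hD : forall j, derive1n (kd j) (cheb n) (x ord0 j / lam) =
                    ((Tp R n)^`(kd j)).[x ord0 j / lam].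
  move=> j; apply: derive1n_poly (hy j) => z hz; apply: cheb_Tp; exact: ltW.
rewrite (@evalDQ_interp m n kd c x lam hl) cabsM cabs_real.
rewrite (ger0_norm (_ : 0 <= lam ^- (\sum_j kd j)%N)); last by rewrite invr_ge0 exprn_ge0 // ltW.
rewrite -mulrA; apply: ler_wpM2l; first by rewrite invr_ge0 exprn_ge0 // ltW.
apply: (le_trans (cabs_sum _ _ _)).
apply: (@le_trans _ _ (\sum_(f : mindex m n)
   `|\prod_j ((ell R n (f j))^`(kd j)).[x ord0 j / lam]| * M)).
  apply: ler_sum => f _; rewrite cabsM cabs_real; apply: ler_wpM2l => //; exact: hM.
rewrite -mulr_suml mulrC [X in _ <= X]mulrC; apply: ler_wpM2l => //.
have -> : \sum_(f : mindex m n) `|\prod_j ((ell R n (f j))^`(kd j)).[x ord0 j / lam]| =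
   \prod_j \sum_(i < n.+1) `|((ell R n i)^`(kd j)).[x ord0 j / lam]|.
  rewrite bigA_distr_bigA; apply: eq_bigr => f _; by rewrite normr_prod.
rewrite normr_prod le_eqVlt; apply/orP; left; apply/eqP; apply: eq_bigr => j _.
by rewrite hD; apply: sum_ell_norm.
Qed.

End PB2.

Section Dot.
Context {R : realType} {m : nat}.
Implicit Types x y z w : 'rV[R]_m.

Lemma dotvC x y : dotv x y = dotv y x.
Proof. by apply: eq_bigr => j _; rewrite mulrC. Qed.
Lemma dotvDl x y z : dotv (x + y) z = dotv x z + dotv y z.
Proof. by rewrite /dotv -big_split; apply: eq_bigr => j _; rewrite mxE mulrDl. Qed.
Lemma dotvZl a x y : dotv (a *: x) y = a * dotv x y.
Proof. by rewrite /dotv mulr_sumr; apply: eq_bigr => j _; rewrite mxE mulrA. Qed.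
Lemma dotvNl x y : dotv (- x) y = - dotv x y.
Proof. by rewrite -scaleN1r dotvZl mulN1r. Qed.
Lemma dotvBl x y z : dotv (x - y) z = dotv x z - dotv y z.
Proof. by rewrite dotvDl dotvNl. Qed.
Lemma dotvDr x y z : dotv z (x + y) = dotv z x + dotv z y.
Proof. by rewrite dotvC dotvDl !(dotvC z). Qed.
Lemma dotvZr a x y : dotv y (a *: x) = a * dotv y x.
Proof. by rewrite dotvC dotvZl dotvC. Qed.
Lemma dotvNr x y : dotv y (- x) = - dotv y x.
Proof. by rewrite dotvC dotvNl dotvC. Qed.
Lemma dotvBr x y z : dotv z (x - y) = dotv z x - dotv z y.
Proof. by rewrite dotvDr dotvNr. Qed.

Lemma dotv_ge0 x : 0 <= dotv x x.
Proof. by apply: sumr_ge0 => j _; rewrite -expr2 sqr_ge0. Qed.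

Lemma dotv_eq0 x : dotv x x = 0 -> x = 0.
Proof.
move=> h; apply/rowP => j; rewrite mxE.
have := @psumr_eq0P _ _ xpredT (fun j => x ord0 j * x ord0 j)
  (fun i _ => @sqr_ge0 _ (x ord0 i)) h j isT.
by move=> /eqP; rewrite mulf_eq0 orbb => /eqP.
Qed.

Lemma enorm_ge0 x : 0 <= enorm x.
Proof. exact: sqrtr_ge0. Qed.

Lemma enorm_sq x : enorm x ^+ 2 = dotv x x.
Proof. by rewrite sqr_sqrtr // dotv_ge0. Qed.

Lemma enormZ a x : enorm (a *: x) = `|a| * enorm x.
Proof.
by rewrite /enorm dotvZl dotvZr mulrA -expr2 sqrtrM ?sqr_ge0 // sqrtr_sqr.
Qed.

Lemma enormN x : enorm (- x) = enorm x.
Proof. by rewrite -scaleN1r enormZ normrN1 mul1r. Qed.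

Lemma coord_le_enorm x j : `|x ord0 j| <= enorm x.
Proof.
rewrite -sqrtr_sqr /enorm; apply: ler_wsqrtr.
rewrite /dotv (bigD1 j) //= expr2 lerDl; apply: sumr_ge0 => i _.
by rewrite -expr2 sqr_ge0.
Qed.

Lemma dotv_exp z w t :
  dotv (z - t *: w) (z - t *: w) = dotv z z - 2 * t * dotv z w + t ^+ 2 * dotv w w.
Proof. by rewrite dotvBl !dotvBr !dotvZl !dotvZr (dotvC w z); ring. Qed.

Lemma dotv_le_enorm x u : enorm u = 1 -> dotv x u <= enorm x.
Proof.
move=> hu; have uu : dotv u u = 1 by rewrite -enorm_sq hu expr1n.
set a := dotv x u.
have h := dotv_ge0 (x - a *: u).
rewrite dotvBl !dotvBr !dotvZl !dotvZr uu (dotvC u x) -/a -enorm_sq in h.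
have := enorm_ge0 x; nra.
Qed.

End Dot.

Section Geo.
Context {R : realType} {m : nat}.
Implicit Types (V : set 'rV[R]_m) (x y z v w : 'rV[R]_m).

Lemma eclosed_closed V : eclosed V -> closed V.
Proof.
move=> hV p hp; apply: hV => e e0.
set M : R := (m.+1)%:R.
have M0 : 0 < M by rewrite ltr0n.
set d := e / M.
have d0 : 0 < d by rewrite divr_gt0.
have [v [Vv bv]] := hp (ball p d) (nbhsx_ballx p d d0).
exists v => //.
move: bv; rewrite mx_norm_ball /= => bv.
have hc : forall j, (p - v) ord0 j ^+ 2 <= d ^+ 2.
  move=> j; rewrite -real_normK ?num_real //; apply: lerXn2r; rewrite ?nnegrE ?normr_ge0 ?ltW //.
  apply: le_lt_trans bv; rewrite [leRHS]/Num.norm /= mx_normrE.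
  exact: (le_bigmax 0 (fun ij : 'I_1 * 'I_m => `|(p - v) ij.1 ij.2|) (ord0, j)).
have hs : dotv (p - v) (p - v) <= m%:R * d ^+ 2.
  rewrite /dotv; apply: (@le_trans _ _ (\sum_(j < m) d ^+ 2)).
    by apply: ler_sum => j _; rewrite -expr2.
  by rewrite sumr_const card_ord mulr_natl.
have hdm : d * M = e by rewrite /d divfK // gt_eqF.
have hM : M = m%:R + 1 by rewrite /M -natr1.
have : m%:R * d ^+ 2 < e ^+ 2.
  rewrite -hdm hM; have := ler0n R m; nra.
move=> h2; rewrite /enorm -(gtr0_norm e0) -sqrtr_sqr ltr_sqrt ?exprn_gt0 //.
exact: le_lt_trans hs h2.
Qed.

Lemma ebounded_bounded V : ebounded V -> bounded_set V.
Proof.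
move=> [B hB]; exists B; split; first exact: num_real.
move=> M hM v Vv /=; rewrite [leLHS]/Num.norm /= mx_normrE.
have B0 : 0 <= B by apply: le_trans (hB v Vv); apply: enorm_ge0.
elim/big_ind: _ => //.
- by apply: ltW; apply: le_lt_trans hM.
- by move=> a b ha hb; rewrite ge_max ha hb.
move=> [i j] _ /=; rewrite (ord1 i); apply: le_trans (coord_le_enorm _ _) _.
by apply: le_trans (hB v Vv) _; apply: ltW.
Qed.

End Geo.

Section Geo2.
Context {R : realType} {m : nat}.
Implicit Types (V : set 'rV[R]_m) (x y z v w : 'rV[R]_m).

Lemma sum_continuous (r : seq 'I_m) (G : 'I_m -> 'rV[R]_m -> R) :
  (forall j, continuous (G j)) -> continuous (fun v => \sum_(j <- r) G j v).
Proof.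
move=> hG; elim: r => [|a r IH].
  have -> : (fun v : 'rV[R]_m => \sum_(j <- [::]) G j v) = cst 0.
    by apply/funext => v; rewrite big_nil.
  exact: cst_continuous.
have -> : (fun v => \sum_(j <- a :: r) G j v) = G a + (fun v => \sum_(j <- r) G j v).
  by apply/funext => v; rewrite big_cons.
by move=> x; apply: continuousD; [apply: hG | apply: IH].
Qed.

Lemma dist_continuous y : continuous (fun v : 'rV[R]_m => dotv (y - v) (y - v)).
Proof.
have -> : (fun v : 'rV[R]_m => dotv (y - v) (y - v)) =
   (fun v => \sum_(j <- index_enum 'I_m) (fun j v => (y ord0 j - v ord0 j) * (y ord0 j - v ord0 j)) j v).
  by apply/funext => v; rewrite /dotv; apply: eq_bigr => j _; rewrite !mxE.
apply: sum_continuous => j x.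
have hc : {for x, continuous (fun v : 'rV[R]_m => y ord0 j - v ord0 j)}.
  apply: (@continuousB _ _ _ (cst (y ord0 j)) (fun v : 'rV[R]_m => v ord0 j)).
    exact: cst_continuous.
  exact: coord_continuous.
exact: (continuousM hc hc).
Qed.

Lemma nearest V y : eclosed V -> ebounded V -> Defs.convex_set V -> (V !=set0)%classic ->
  exists2 p, V p & forall v, V v -> dotv (y - p) (v - p) <= 0.
Proof.
move=> cl bd cv ne.
have cV : compact V := bounded_closed_compact (ebounded_bounded bd) (eclosed_closed cl).
have [p pV pmin] := compact_EVT_min ne cV (continuous_subspaceT (@dist_continuous y)).
rewrite inE in pV; exists p => // v Vv.
set z := y - p; set w := v - p.
set A := dotv z w; set B := dotv w w.
have B0 : 0 <= B := dotv_ge0 w.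
have key : forall t, 0 < t -> t <= 1 -> 2 * A <= t * B.
  move=> t t0 t1.
  have hq : V (t *: v + (1 - t) *: p) by apply: (cv _ _ _ Vv pV); rewrite t1 andbT ltW.
  have := pmin _ (mem_set hq).
  have -> : y - (t *: v + (1 - t) *: p) = z - t *: w.
    by apply/rowP => j; rewrite !mxE; ring.
  rewrite dotv_exp -/z -/A -/B => h.
  have : 0 <= t * (t * B - 2 * A) by nra.
  by rewrite pmulr_rge0 // subr_ge0.
rewrite -/z -/w -/A; case: (lerP A 0) => // A0.
have AB0 : 0 < A + B by lra.
have hle : A / (A + B) <= 1 by rewrite ler_pdivrMr // mul1r; lra.
have := key (A / (A + B)) (divr_gt0 A0 AB0) hle.
rewrite mulrAC ler_pdivlMr // => h; nra.
Qed.

Lemma ball0 V : Defs.convex_set V -> centrally_symmetric V -> nonempty_interior V ->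
  exists2 r : R, 0 < r & forall y, enorm y < r -> V y.
Proof.
move=> cv cs [x0 [r [r0 hr]]]; exists r => // y hy.
have h1 : V (x0 + y).
  by apply: hr; have -> : x0 + y - x0 = y by rewrite addrC addKr.
have h2 : V (- x0 + y).
  have -> : - x0 + y = - (x0 - y) by rewrite opprB addrC.
  apply: cs; apply: hr.
  have -> : x0 - y - x0 = - y by rewrite addrC addKr.
  by rewrite enormN.
have := cv _ _ (1/2) h1 h2.
have -> : 1 / 2 *: (x0 + y) + (1 - 1 / 2) *: (- x0 + y) = y.
  by apply/rowP => j; rewrite !mxE; field.
by apply; rewrite divr_ge0 ?ler_pdivrMr //= ?mul1r; lra.
Qed.

End Geo2.

Section Width.
Context {R : realType} {m : nat}.
Implicit Types (V : set 'rV[R]_m) (x y z v w : 'rV[R]_m).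

Lemma enorm_gt0 z : z != 0 -> 0 < enorm z.
Proof.
move=> z0; rewrite /enorm sqrtr_gt0 lt_def dotv_ge0 andbT.
by apply: contra z0 => /eqP /dotv_eq0 ->.
Qed.

Lemma supp_pair V y r : eclosed V -> ebounded V -> Defs.convex_set V ->
  centrally_symmetric V -> 0 < r -> (forall y, enorm y < r -> V y) -> ~ V y ->
  exists u (h : R), [/\ supporting_hyperplane V u h, supporting_hyperplane V u (- h),
     r / 2 <= h & h < enorm y].
Proof.
move=> cl bd cv cs r0 hr Vy.
have V0 : V 0 by apply: hr; rewrite /enorm /dotv big1 ?sqrtr0 // => j _; rewrite mxE mul0r.
have [p Vp hp] := nearest y cl bd cv (ex_intro _ 0 V0).
set z := y - p.
have z0 : z != 0 by apply/eqP => /eqP; rewrite subr_eq0 => /eqP ey; apply: Vy; rewrite ey.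
set nz := enorm z.
have nz0 : 0 < nz := enorm_gt0 z0.
set u := nz^-1 *: z.
have hu : enorm u = 1 by rewrite /u enormZ ger0_norm ?invr_ge0 ?ltW // mulVf ?gt_eqF.
have uu : dotv u u = 1 by rewrite -enorm_sq hu expr1n.
set h := dotv p u.
have hv : forall v, V v -> dotv v u <= h.
  move=> v Vv; rewrite -subr_le0 /h -dotvBl /u dotvZr dotvC.
  by rewrite pmulr_rle0 ?invr_gt0 // hp.
have hy : dotv y u = h + nz.
  have -> : y = p + z by rewrite /z addrC subrK.
  rewrite dotvDl -/h /u dotvZr -enorm_sq -/nz; congr (_ + _).
  by rewrite expr2 mulrA mulVf ?mul1r ?gt_eqF.
have hr2 : r / 2 <= h.
  have Vv0 : V ((r / 2) *: u).
    by apply: hr; rewrite enormZ hu mulr1 ger0_norm ?divr_ge0 ?ltW //; lra.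
  by have := hv _ Vv0; rewrite dotvZl uu mulr1.
exists u, h; split => //.
- split=> //; split; first by left.
  by exists p.
- split=> //; split.
    right => v Vv; have := hv _ (cs _ Vv); rewrite dotvNl; lra.
  by exists (- p); [apply: cs | rewrite dotvNl].
- have := dotv_le_enorm y hu; lra.
Qed.

Lemma width_facts V y r : eclosed V -> ebounded V -> Defs.convex_set V ->
  centrally_symmetric V -> 0 < r -> (forall y, enorm y < r -> V y) -> ~ V y ->
  r <= width V /\ width V < 2 * enorm y.
Proof.
move=> cl bd cv cs r0 hr Vy.
have [u [h [s1 s2 hh hy]]] := supp_pair cl bd cv cs r0 hr Vy.
set E := [set d : R | exists u c1 c2, [/\ supporting_hyperplane V u c1,
        supporting_hyperplane V u c2, c1 != c2 & d = `|c1 - c2|]]%classic.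
have Eh : E (2 * h).
  exists u, h, (- h); split => //.
    by apply/eqP => e; lra.
  by rewrite opprK ger0_norm; lra.
have lbE : has_lbound E.
  by exists 0 => d [uq [c1 [c2 [_ _ _ ->]]]]; apply: normr_ge0.
split.
  apply: lb_le_inf; first by exists (2 * h).
  move=> d [uq [c1 [c2 [S1 S2 c12 ->]]]].
  case: S1 => hu1 [or1 [w1 Vw1 ew1]]; case: S2 => hu2 [or2 [w2 Vw2 ew2]].
  have uu : dotv uq uq = 1 by rewrite -enorm_sq hu1 expr1n.
  have Vp : V ((r / 2) *: uq).
    by apply: hr; rewrite enormZ hu1 mulr1 ger0_norm ?divr_ge0 ?ltW //; lra.
  have Vn : V (- ((r / 2) *: uq)) by apply: cs.
  have ep : dotv ((r / 2) *: uq) uq = r / 2 by rewrite dotvZl uu mulr1.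
  have en : dotv (- ((r / 2) *: uq)) uq = - (r / 2) by rewrite dotvNl ep.
  have c12' : c1 <> c2 by move=> e; move: c12; rewrite e eqxx.
  case: or1 => [or1|or1]; case: or2 => [or2|or2].
  - have := or1 _ Vw2; have := or2 _ Vw1; rewrite ew1 ew2 => a b.
    by exfalso; apply: c12'; apply/eqP; rewrite eq_le a b.
  - have := or1 _ Vp; have := or2 _ Vn; rewrite ep en => a b.
    rewrite ler_normr; apply/orP; left; lra.
  - have := or1 _ Vn; have := or2 _ Vp; rewrite ep en => a b.
    rewrite ler_normr; apply/orP; right; lra.
  - have := or1 _ Vw2; have := or2 _ Vw1; rewrite ew1 ew2 => a b.
    by exfalso; apply: c12'; apply/eqP; rewrite eq_le a b.
apply: (le_lt_trans (ge_inf lbE Eh)); lra.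
Qed.

End Width.

Section PA.
Context {R : realType}.
Local Notation RC := (real_complex R).

Lemma monom_scale m n (k : mindex m n) (a : R) (e : 'rV[R]_m) :
  monom k (a *: e) = a ^+ deg k * monom k e.
Proof.
by rewrite /monom /deg -prodrXr -big_split; apply: eq_bigr => j _; rewrite mxE exprMn.
Qed.

Lemma pow_interp n a (s : R) : (a <= n)%N ->
  s ^+ a = \sum_(i < n.+1) eta R n i ^+ a * (ell R n i).[s].
Proof.
move=> ha; have := congr1 (horner^~ s) (@Xn_interp R n a ha).
by rewrite /= hornerXn horner_sum => ->; apply: eq_bigr => i _; rewrite hornerZ.
Qed.

Lemma evalP_line m n (c : mindex m n -> R[i]) (s : R) (e : 'rV[R]_m) :
  evalP c (s *: e) = \sum_(i < n.+1) RC ((ell R n i).[s]) * evalP c (eta R n i *: e).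
Proof.
rewrite /evalP.
transitivity (\sum_(k | (deg k <= n)%N) \sum_(i < n.+1)
   RC ((ell R n i).[s]) * (c k * RC (monom k (eta R n i *: e)))).
  apply: eq_bigr => k hk; rewrite monom_scale (pow_interp s hk) mulr_suml rmorph_sum mulr_sumr.
  by apply: eq_bigr => i _; rewrite monom_scale !rmorphM; ring.
by rewrite exchange_big; apply: eq_bigr => i _; rewrite mulr_sumr.
Qed.

Lemma partA m n (V : set 'rV[R]_m) (x : 'rV[R]_m) (c : mindex m n -> R[i]) :
  convex_body V -> centrally_symmetric V -> ~ V x ->
  cabs (evalP c x) <= cheb n (2 * enorm x / width V) * supnorm V (evalP c).
Proof.
move=> [cl bd cv ni] cs Vx.
have [r r0 hr] := ball0 cv cs ni.
have [hw1 hw2] := width_facts cl bd cv cs r0 hr Vx.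
set w := width V.
have w0 : 0 < w by apply: lt_le_trans hw1.
have inV : forall y, enorm y <= w / 2 -> V y.
  move=> y hy; case: (pselect (V y)) => Vy; first exact: Vy.
  by have [_ h] := width_facts cl bd cv cs r0 hr Vy; rewrite -/w in h; exfalso; lra.
set nx := enorm x.
set s := 2 * nx / w.
have s1 : 1 < s by rewrite /s ltr_pdivlMr // mul1r.
have nx0 : 0 < nx by move: hw2; rewrite -/w -/nx => hw2; lra.
set e := (w / (2 * nx)) *: x.
have hx : x = s *: e.
  rewrite /e scalerA (_ : s * (w / (2 * nx)) = 1) ?scale1r //.
  by rewrite /s; field; apply/andP; split; rewrite gt_eqF //; lra.
set M := supnorm V (evalP c).
have [B hB] := bd.
have hM : forall i : 'I_n.+1, cabs (evalP c (eta R n i *: e)) <= M.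
  move=> i; apply: (@supnorm_ge _ _ _ _ _
      (\sum_(k | (deg k <= n)%N) cabs (c k) * \prod_j B ^+ k j)).
    apply: inV; rewrite /e !enormZ -/nx (ger0_norm (x := w / (2 * nx))); last first.
      by rewrite divr_ge0 ?ltW //; lra.
    have h1 := eta_le1 R n i.
    have -> : w / (2 * nx) * nx = w / 2 by field; rewrite gt_eqF.
    by rewrite -[leRHS]mul1r ler_wpM2r // divr_ge0 ?ltW.
  move=> z Vz; apply: sum_mono_bound => j.
  exact: le_trans (coord_le_enorm _ _) (hB z Vz).
rewrite {1}hx evalP_line.
apply: (le_trans (cabs_sum _ _ _)).
apply: (@le_trans _ _ (\sum_(i < n.+1) `|(ell R n i).[s]| * M)).
  apply: ler_sum => i _; rewrite cabsM cabs_real; apply: ler_wpM2l => //; exact: hM.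
rewrite -mulr_suml sum_ell_pos // cheb_Tp //.
by rewrite ler_normr; apply/orP; left; apply: ltW.
Qed.

End PA.

Local Open Scope classical_set_scope.

Theorem lemmaL2p4 (R : realType) :
  (* (a) *)
  (forall (m n : nat) (V : set 'rV[R]_m) (x : 'rV[R]_m) (c : mindex m n -> R[i]),
     convex_body V -> centrally_symmetric V -> ~ V x ->
     cabs (evalP c x) <= cheb n (2 * enorm x / width V) * supnorm V (evalP c))
  /\
  (* (b) *)
  (forall (m n : nat) (lam : R) (kd : 'I_m -> nat) (x : 'rV[R]_m)
          (c : mindex m n -> R[i]),
     0 < lam -> (forall j, lam < `|x ord0 j|) ->
     cabs (evalDQ kd c x) <=
       lam ^- (\sum_(j < m) kd j)%N *
       `|\prod_(j < m) derive1n (kd j) (cheb n) (x ord0 j / lam)| *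
       supnorm (@cube R m lam) (evalQ c)).
Proof.
split.
  by move=> m n V x c; apply: partA.
by move=> m n lam kd x c; apply: partB.
Qed.
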